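(* Let $n,m,j,k$ be positive integers with $m\leq2^{n+1}$ and $j,k\leq\left\lfloor\frac{m+1}{4}\right\rfloor$. Then the equation $$(1-2^n)x+(2j-1)2^y=(2k-1)2^z$$ has no integer solutions with $x>0$, $0\leq y<\left\lfloor\log_2\left(\frac{m-1}{2j-1}\right)\right\rfloor$, and $z\geq0$. *)

(* Defs.v *)
From Stdlib Require Import Reals ZArith Lia Lra.
Open Scope R_scope.

(* floor(log_2 q) for a real q > 0 (junk value for q <= 0). *)
Definition floor_log2 (q : R) : Z := Int_part (ln q / ln 2).

(* Main.v *)
Require Import Defs.
From Stdlib Require Import Reals ZArith Lia Lra.

Lemma key (m j y : nat) : (1 <= j)%nat ->
  (Z.of_nat y < floor_log2 (INR (m - 1) / INR (2 * j - 1)))%Z ->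
  (2 ^ (y + 1) * (2 * j - 1) <= m - 1)%nat.
Proof.
  intros Hj H. unfold floor_log2 in H.
  set (q := INR (m - 1) / INR (2 * j - 1)) in *.
  assert (Hd : 0 < INR (2 * j - 1)) by (apply lt_0_INR; lia).
  pose proof (base_Int_part (ln q / ln 2)) as [Hb _].
  assert (Hy : IZR (Z.of_nat y) + 1 <= IZR (Int_part (ln q / ln 2))).
  { rewrite <- plus_IZR. apply IZR_le. lia. }
  rewrite <- INR_IZR_INZ in Hy.
  assert (Hl2 : 0 < ln 2) by (rewrite <- ln_1; apply ln_increasing; lra).
  assert (Hr : INR (y + 1) * ln 2 <= ln q).
  { rewrite plus_INR. simpl INR.
    assert (INR y + 1 <= ln q / ln 2) by lra.
    apply (Rmult_le_compat_r (ln 2)) in H0; [|lra].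
    unfold Rdiv in H0. rewrite Rmult_assoc, Rinv_l in H0; lra. }
  destruct (Rlt_dec 0 q) as [Hq|Hq].
  - assert (Hp : INR (2 ^ (y + 1)) <= q).
    { rewrite pow_INR. simpl INR. replace (1+1) with 2 by lra.
      rewrite <- Rpower_pow by lra. unfold Rpower.
      rewrite <- (exp_ln q) by exact Hq. apply exp_le_3 || idtac.
      destruct (Rle_lt_or_eq_dec _ _ Hr) as [h|h].
      + left. apply exp_increasing. lra.
      + right. f_equal. lra. }
    apply INR_le. rewrite mult_INR.
    unfold q in Hp. apply (Rmult_le_compat_r (INR (2*j-1))) in Hp; [|lra].
    unfold Rdiv in Hp. rewrite Rmult_assoc, Rinv_l in Hp; lra.
  - exfalso. assert (ln q = 0).
    { unfold ln. destruct (Rlt_dec 0 q); [contradiction|reflexivity]. }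
    rewrite H0 in Hr. pose proof (pos_INR y). rewrite plus_INR in Hr. simpl in Hr.
    nra.
Qed.

Theorem lemma4p5 (n m j k : nat) (x : Z) (y z : nat) :
  (1 <= n)%nat -> (1 <= m)%nat -> (1 <= j)%nat -> (1 <= k)%nat ->
  (m <= 2 ^ (n + 1))%nat ->
  (j <= (m + 1) / 4)%nat -> (k <= (m + 1) / 4)%nat ->
  (0 < x)%Z ->
  (Z.of_nat y < floor_log2 (INR (m - 1) / INR (2 * j - 1)))%Z ->
  ((1 - 2 ^ Z.of_nat n) * x + (2 * Z.of_nat j - 1) * 2 ^ Z.of_nat y
     <> (2 * Z.of_nat k - 1) * 2 ^ Z.of_nat z)%Z.
Proof.
  intros Hn Hm Hj Hk Hmn _ _ Hx Hy.
  pose proof (key m j y Hj Hy) as K.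
  rewrite Nat.pow_add_r in K, Hmn. simpl (2 ^ 1)%nat in K, Hmn.
  rewrite <- !(Nat2Z.inj_pow 2). 
  pose proof (Nat.pow_le_mono_r 2 1 n ltac:(lia) Hn) as Hn2. simpl (2^1)%nat in Hn2.
  pose proof (Nat.pow_nonzero 2 z ltac:(lia)).
  set (P := (2^y)%nat) in *. set (Q := (2^n)%nat) in *. set (W := (2^z)%nat) in *.
  assert (Hxq : ((1 - Z.of_nat Q) * x <= 1 - Z.of_nat Q)%Z) by nia.
  assert (HK : (Z.of_nat P * (2 * Z.of_nat j - 1) * 2 <= Z.of_nat m - 1)%Z) by lia.
  assert (Hw : (1 <= (2 * Z.of_nat k - 1) * Z.of_nat W)%Z) by nia.
  lia.
Qed.
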